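(* For every $k\ge1$, a transduction $f:\Sigma^*\rightharpoonup\Gamma^*$ is $k$-lexicographic (i.e. belongs to $\mathsf{Lex}_k$) if and only if it is $k$-lexicographic automatic.
   Context: Alphabets are finite. For words $u,v$ of equal length over alphabets $\Sigma_1,\Sigma_2$, $u\otimes v$ is the word over $\Sigma_1\times\Sigma_2$ with $(u\otimes v)[i]=(u[i],v[i])$. A transduction is a partial function $f:\Sigma^*\rightharpoonup\Gamma^*$. A simple transduction is a transduction $f=\sum_{i=1}^n L_i\triangleright w_i$, where $L_1,\dots,L_n\subseteq\Sigma^*$ are pairwise disjoint regular languages and each $w_i\in\Gamma^{\le 1}$ is a word of length at most 1. It satisfies $f(u)=w_i$ if $u\in L_i$, and $f(u)$ is undefined if $u\notin\bigcup_iL_i$. An ordered alphabet is a pair $\lambda=(B,\prec)$ with $B$ a finite set and $\prec$ a strict linear order on $B$. The order is extended to $B^n$ for each $n$ by: $u\prec v$ iff there is $i\le n$ with $u[i]\prec v[i]$ and $u[j]=v[j]$ for all $i<j\le n$ (most significant letter on the right). For a transduction $f:(\Sigma\times B)^*\rightharpoonup\Gamma^*$, the transduction $\mathsf{maplex}_\lambda f:\Sigma^*\rightharpoonup\Gamma^*$ maps $u$ to $f(u\otimes b_1)f(u\otimes b_2)\cdots f(u\otimes b_m)$, where $b_1\prec\cdots\prec b_m$ is the increasing enumeration of all of $B^{|u|}$. It is defined on $u$ iff every $f(u\otimes b_j)$ is defined. The classes are defined inductively: - $\mathsf{Lex}_0$ is the class of simple transductions; - $\mathsf{Lex}_{k+1}=\{\mathsf{maplex}_\lambda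 f: \lambda=(B,\prec)\text{ an ordered alphabet},\ f:(\Sigma\times B)^*\rightharpoonup\Gamma^*\text{ in }\mathsf{Lex}_k\}$; - $\mathsf{Lex}=\bigcup_k\mathsf{Lex}_k$, the lexicographic transductions. Elements of $\mathsf{Lex}_k$ are called $k$-lexicographic. A $k$-lexicographic automatic transducer from $\Sigma^*$ to $\Gamma^*$ consists of: - ordered alphabets $\lambda_i=(B_i,\prec_i)$, $1\le i\le k$, with $B=B_1\times\cdots\times B_k$; - finite automata $A_{dom}$ over $\Sigma$, $A_{univ}$ over $\Sigma\times B$, and $A_\gamma$ over $\Sigma\times B$ for each $\gamma\in\Gamma$. These must satisfy: for every $u\in L(A_{dom})$ and every $x$ with $u\otimes x\in L(A_{univ})$, exactly one $\gamma$ has $u\otimes x\in L(A_\gamma)$. For $x=x_1\otimes\cdots\otimes x_k$ and $y=y_1\otimes\cdots\otimes y_k$ with $x_i,y_i\in B_i^n$, let $x\prec_{\bar\lambda}y$ iff there is $i$ with $x_i\prec_i y_i$ (in the lexicographic extension) and $x_j=y_j$ for all $j<i$. On $u\in L(A_{dom})$, the output is the word whose positions are the elements of $V=\{x\in B^{|u|}: u\otimes x\in L(A_{univ})\}$ in increasing $\prec_{\bar\lambda}$-order, position $x$ carrying the label $\gamma$ with $u\otimes x\in L(A_\gamma)$. The output is undefined if $u\notin L(A_{dom})$. A transduction is $k$-lexicographic automatic if it is defined by such a transducer. *)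

(* Defs.v *)
From mathcomp Require Import all_boot.
Set Implicit Arguments.
Unset Strict Implicit.
Unset Printing Implicit Defensive.

Definition transduction (S G : finType) := seq S -> option (seq G).

Record dfa (A : finType) := DFA {
  dfa_st : finType;
  dfa_s : dfa_st;
  dfa_acc : pred dfa_st;
  dfa_tr : dfa_st -> A -> dfa_st }.

Definition accepts (A : finType) (M : dfa A) (w : seq A) : bool :=
  @dfa_acc A M (foldl (@dfa_tr A M) (@dfa_s A M) w).

Definition wtensor (S B : finType) (u : seq S) (x : seq B) : seq (S * B) :=
  zip u x.

Definition simple_trans (S G : finType) (f : transduction S G) : Prop :=
  exists (n : nat) (L : 'I_n -> dfa S) (w : 'I_n -> seq G),
    (forall i j : 'I_n, i != j -> forall u, ~~ (accepts (L i) u && accepts (L j) u)) /\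
    (forall i, size (w i) <= 1) /\
    (forall u, (forall i, accepts (L i) u -> f u = Some (w i)) /\
               ((forall i, ~~ accepts (L i) u) -> f u = None)).

Record ordAlph := OrdAlph {
  oa_T :> finType;
  oa_lt : rel oa_T;
  oa_irr : irreflexive oa_lt;
  oa_trans : transitive oa_lt;
  oa_total : forall x y : oa_T, x != y -> oa_lt x y || oa_lt y x }.

(* Extension of the order to B^n: most significant letter on the right. *)
Definition rlex_lt (B : ordAlph) (n : nat) (u v : n.-tuple B) : bool :=
  [exists i : 'I_n, oa_lt (tnth u i) (tnth v i) &&
     [forall j : 'I_n, (i < j) ==> (tnth u j == tnth v j)]].

Definition rlex_le (B : ordAlph) (n : nat) (u v : n.-tuple B) : bool :=
  (u == v) || rlex_lt u v.

Definition enum_words (B : ordAlph) (n : nat) : seq (n.-tuple B) :=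
  sort (@rlex_le B n) (enum {: n.-tuple B}).

Definition maplex (S G : finType) (B : ordAlph)
    (f : transduction (S * B)%type G) : transduction S G :=
  fun u =>
    let outs := map (fun x : (size u).-tuple B => f (wtensor u x))
                    (enum_words B (size u)) in
    if all (fun o => o != None) outs then Some (flatten (pmap id outs)) else None.

Inductive isLex : nat -> forall (S G : finType), transduction S G -> Prop :=
  | Lex0 (S G : finType) (f : transduction S G) :
      simple_trans f -> isLex 0 f
  | LexS (k : nat) (S G : finType) (B : ordAlph)
      (g : transduction (S * B)%type G) (f : transduction S G) :
      isLex k g -> (forall u, f u = maplex g u) -> isLex k.+1 f.

Definition prodAlph (k : nat) (lam : 'I_k -> ordAlph) : finType :=
  {dffun forall i : 'I_k, lam i}.

Definition comp_word (k : nat) (lam : 'I_k -> ordAlph) (n : nat)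
    (x : n.-tuple (prodAlph lam)) (i : 'I_k) : n.-tuple (lam i) :=
  map_tuple (fun b : prodAlph lam => b i) x.

Definition multi_lt (k : nat) (lam : 'I_k -> ordAlph) (n : nat)
    (x y : n.-tuple (prodAlph lam)) : bool :=
  [exists i : 'I_k, rlex_lt (comp_word x i) (comp_word y i) &&
     [forall j : 'I_k, (j < i) ==> (comp_word x j == comp_word y j)]].

Definition multi_le (k : nat) (lam : 'I_k -> ordAlph) (n : nat)
    (x y : n.-tuple (prodAlph lam)) : bool :=
  (x == y) || multi_lt x y.

Definition auto_valid (S G : finType) (k : nat) (lam : 'I_k -> ordAlph)
    (Adom : dfa S) (Auniv : dfa (S * prodAlph lam)%type)
    (Ag : G -> dfa (S * prodAlph lam)%type) : Prop :=
  forall u, accepts Adom u ->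
    forall x : (size u).-tuple (prodAlph lam),
      accepts Auniv (wtensor u x) ->
      exists! g : G, accepts (Ag g) (wtensor u x).

Definition auto_sem (S G : finType) (k : nat) (lam : 'I_k -> ordAlph)
    (Adom : dfa S) (Auniv : dfa (S * prodAlph lam)%type)
    (Ag : G -> dfa (S * prodAlph lam)%type) : transduction S G :=
  fun u =>
    if accepts Adom u then
      let V := [seq x : (size u).-tuple (prodAlph lam) <- enum {: (size u).-tuple (prodAlph lam)}
                 | accepts Auniv (wtensor u x)] in
      let Vs := sort (@multi_le k lam (size u)) V in
      Some (pmap (fun x : (size u).-tuple (prodAlph lam) => [pick g : G | accepts (Ag g) (wtensor u x)]) Vs)
    else None.

Definition lex_automatic (k : nat) (S G : finType) (f : transduction S G) : Prop :=
  exists (lam : 'I_k -> ordAlph) (Adom : dfa S)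
         (Auniv : dfa (S * prodAlph lam)%type)
         (Ag : G -> dfa (S * prodAlph lam)%type),
    auto_valid Adom Auniv Ag /\ forall u, f u = auto_sem Adom Auniv Ag u.

(* Main.v *)
Require Import Defs.
From mathcomp Require Import all_boot.
From mathcomp Require Import zify.

Module LexProof.
Set Implicit Arguments.
Unset Strict Implicit.
Unset Printing Implicit Defensive.


Section DfaOps.
Variable A : finType.

Definition dfa_bin (op : bool -> bool -> bool) (M1 M2 : dfa A) : dfa A :=
  @DFA A (dfa_st M1 * dfa_st M2)%type (dfa_s M1, dfa_s M2)
    (fun q => op (dfa_acc q.1) (dfa_acc q.2))
    (fun q a => (dfa_tr q.1 a, dfa_tr q.2 a)).

Lemma accepts_bin op M1 M2 w :
  accepts (dfa_bin op M1 M2) w = op (accepts M1 w) (accepts M2 w).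
Proof.
rewrite /accepts /=; suff -> : forall q1 q2,
  foldl (fun q a => (dfa_tr q.1 a, dfa_tr q.2 a)) (q1, q2) w =
  (foldl (@dfa_tr A M1) q1 w, foldl (@dfa_tr A M2) q2 w) by [].
by elim: w => //= a w IH q1 q2; rewrite IH.
Qed.

Definition dfa_not (M : dfa A) : dfa A :=
  @DFA A (dfa_st M) (dfa_s M) (fun q => ~~ dfa_acc q) (@dfa_tr A M).

Lemma accepts_not M w : accepts (dfa_not M) w = ~~ accepts M w.
Proof. by []. Qed.

Definition dfa_all : dfa A := @DFA A unit tt (fun _ => true) (fun _ _ => tt).
Lemma accepts_all w : accepts dfa_all w. Proof. by []. Qed.

Definition dfa_comb (I : finType) (M : I -> dfa A) (P : pred {ffun I -> bool}) : dfa A :=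
  @DFA A {dffun forall i, dfa_st (M i)} (finfun (fun i => dfa_s (M i)))
    (fun q => P [ffun i => dfa_acc (q i)])
    (fun q a => finfun (fun i => dfa_tr (q i) a)).

Lemma accepts_comb I M P w :
  accepts (@dfa_comb I M P) w = P [ffun i => accepts (M i) w].
Proof.
rewrite /accepts /=.
suff H : forall (q : {dffun forall i, dfa_st (M i)}) w,
  foldl (fun (q : {dffun forall i, dfa_st (M i)}) a => finfun (fun i => dfa_tr (q i) a)) q w =
  finfun (fun i => foldl (@dfa_tr A (M i)) (q i) w).
  by rewrite H; congr P; apply/ffunP => i; rewrite !ffunE.
move=> q w'; elim: w' q => [|a w' IH] q /=.
  by apply/ffunP => i; rewrite ffunE.
by rewrite IH; apply/ffunP => i; rewrite !ffunE.
Qed.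
End DfaOps.

Section DfaOmap.
Variables (A A' : finType) (M : dfa A) (h : A' -> option A).

Definition dfa_omap : dfa A' :=
  @DFA A' (option (dfa_st M)) (Some (dfa_s M))
    (fun o => if o is Some q then dfa_acc q else false)
    (fun o a => if o is Some q then omap (dfa_tr q) (h a) else None).

Lemma accepts_omap w :
  accepts dfa_omap w = all (fun a => h a != None) w && accepts M (pmap h w).
Proof.
rewrite /accepts /=.
have N : forall w, foldl (fun o a => if o is Some q then omap (@dfa_tr A M q) (h a) else None) None w = None.
  by elim=> //.
move: (dfa_s M); elim: w => [|a w IH] q //=.
by case: (h a) => [b|] /=; rewrite ?IH ?N.
Qed.
End DfaOmap.

Section DfaForall.
Variables (S B : finType) (M : dfa (S * B)%type).

Definition dfa_forall : dfa S :=
  @DFA S {set dfa_st M} [set dfa_s M]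
    (fun X => [forall q in X, dfa_acc q])
    (fun X a => [set dfa_tr q (a, b) | q in X, b in B]).

Lemma forall_run (u : seq S) (X : {set dfa_st M}) q' :
  q' \in foldl (@dfa_tr S dfa_forall) X u <->
  exists2 q, q \in X & exists x : seq B, size x = size u /\ q' = foldl (@dfa_tr _ M) q (zip u x).
Proof.
elim: u X => [|a u IH] X /=.
  split; first by move=> H; exists q' => //; exists [::].
  by case=> q Hq [[|b0 x0] [//= H1 ->]].
apply: (iff_trans (IH _)); split.
  case=> q1 H1 [x [Hx ->]]; move: H1 => /imset2P [q b Hq _ ->].
  by exists q => //; exists (b :: x); rewrite /= Hx.
case=> q Hq [x0 [Hx0 ->]]; case: x0 Hx0 => [|b x] //= [Hx].
exists (dfa_tr q (a, b)); first by apply/imset2P; exists q b.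
by exists x.
Qed.

Lemma accepts_forall u :
  accepts dfa_forall u = [forall x : (size u).-tuple B, accepts M (zip u x)].
Proof.
apply/idP/idP.
  move=> /forall_inP H; apply/forallP => x; rewrite /accepts.
  apply: H; apply/forall_run; exists (dfa_s M); first exact: set11.
  by exists x; rewrite size_tuple.
move=> /forallP H; apply/forall_inP => q /forall_run [q0 /set1P -> [x [Hx ->]]].
have := H (Tuple (introT eqP Hx)); by [].
Qed.
End DfaForall.


Definition sto (T : eqType) (lt : rel T) :=
  [/\ irreflexive lt, transitive lt & forall x y, x != y -> lt x y || lt y x].

Definition lel (T : eqType) (lt : rel T) : rel T := fun x y => (x == y) || lt x y.

Section StoLe.
Variables (T : eqType) (lt : rel T) (H : sto lt).

Lemma sto_asym x y : lt x y -> lt y x -> False.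
Proof. case: H => irr tr _ xy yx; by have := irr x; rewrite (tr _ _ _ xy yx). Qed.

Lemma lel_total : total (lel lt).
Proof.
move=> x y; rewrite /lel /=; case: (eqVneq x y) => [->|nxy] /=.
  by [].
case: H => _ _ tot; by rewrite tot.
Qed.

Lemma lel_trans : transitive (lel lt).
Proof.
move=> y x z; rewrite /lel /=; case/orP => [/eqP ->//|xy]; case/orP => [/eqP <-|yz].
  by rewrite xy orbT.
case: H => _ tr _; by rewrite (tr _ _ _ xy yz) orbT.
Qed.

Lemma lel_asym : antisymmetric (lel lt).
Proof.
move=> x y; rewrite /lel /=; case/andP; case/orP => [/eqP //|xy]; case/orP => [/eqP //|yx].
by case: (sto_asym xy yx).
Qed.
End StoLe.

Section GLex.
Variables (I : finType) (key : I -> nat) (key_inj : injective key).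
Variables (T : I -> eqType) (lt : forall i, rel (T i)).
Hypothesis lt_sto : forall i, sto (@lt i).

Definition glt (x y : forall i, T i) :=
  [exists i, lt (x i) (y i) && [forall j, (key j < key i) ==> (x j == y j)]].

Lemma glt_irr x : ~~ glt x x.
Proof.
apply/existsP => -[i /andP [H _]]; case: (lt_sto i) => irr _ _.
by rewrite irr in H.
Qed.

Lemma glt_trans x y z : glt x y -> glt y z -> glt x z.
Proof.
move=> /existsP [i /andP [Hi /forallP Ei]] /existsP [j /andP [Hj /forallP Ej]].
apply/existsP; case: (ltngtP (key i) (key j)) => [ij|ji|ij].
- exists i; have := Ej i; rewrite ij /= => /eqP <-; rewrite Hi /=.
  apply/forallP => l; apply/implyP => li.
  have := Ej l; rewrite (ltn_trans li ij) /= => /eqP <-.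
  by have := Ei l; rewrite li.
- exists j; have := Ei j; rewrite ji /= => /eqP ->; rewrite Hj /=.
  apply/forallP => l; apply/implyP => lj.
  have := Ei l; rewrite (ltn_trans lj ji) /= => /eqP ->.
  by have := Ej l; rewrite lj.
- have eij := key_inj ij; subst j.
  exists i; case: (lt_sto i) => _ tr _; rewrite (tr _ _ _ Hi Hj) /=.
  apply/forallP => l; apply/implyP => li.
  have := Ej l; rewrite li /= => /eqP <-.
  by have := Ei l; rewrite li.
Qed.

Lemma glt_total x y : (exists i, x i != y i) -> glt x y || glt y x.
Proof.
case=> i0 Hi0.
case: (@arg_minnP _ i0 (fun i => x i != y i) key Hi0) => i Hi Hmin.
have Heq : forall j, key j < key i -> x j == y j.
  move=> j kj; apply/negPn/negP => nj.
  by have := Hmin j nj; rewrite leqNgt kj.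
case: (lt_sto i) => _ _ tot; case/orP: (tot _ _ Hi) => H.
  apply/orP; left; apply/existsP; exists i; rewrite H /=.
  by apply/forallP => j; apply/implyP; apply: Heq.
apply/orP; right; apply/existsP; exists i; rewrite H /=.
by apply/forallP => j; apply/implyP => kj; rewrite eq_sym Heq.
Qed.

Lemma glt_neq x y : glt x y -> exists i, x i != y i.
Proof.
move=> /existsP [i /andP [H _]]; exists i; apply/negP => /eqP E.
by case: (lt_sto i) => irr _ _; move: H; rewrite E irr.
Qed.
End GLex.

Lemma oa_sto (B : ordAlph) : sto (@oa_lt B).
Proof. split; [exact: oa_irr | exact: oa_trans | exact: oa_total]. Qed.

Lemma rlex_glt (B : ordAlph) n (u v : n.-tuple B) :
  rlex_lt u v = glt (fun i : 'I_n => n - i) (T := fun _ => B) (fun _ => @oa_lt B) (tnth u) (tnth v).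
Proof.
apply: eq_existsb => i; congr (_ && _); apply: eq_forallb => j.
congr (_ ==> _); case: i => a ha; case: j => b hb /=; apply/idP/idP => h; lia.
Qed.

Lemma rlex_key_inj n : injective (fun i : 'I_n => n - i).
Proof. move=> [a ha] [b hb] /= E; apply/val_inj => /=; lia. Qed.

Lemma rlex_sto (B : ordAlph) n : sto (@rlex_lt B n).
Proof.
split.
- by move=> u; rewrite rlex_glt; apply/negbTE/glt_irr => i; exact: oa_sto.
- move=> v u w; rewrite !rlex_glt; apply: glt_trans; [exact: rlex_key_inj | move=> i; exact: oa_sto].
- move=> u v nuv; rewrite !rlex_glt; apply: glt_total => [i|]; first exact: oa_sto.
  case: (boolP [exists i, tnth u i != tnth v i]) => [/existsP //|/existsPn H].
  case/negP: nuv; apply/eqP/eq_from_tnth => i.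
  by have := H i; rewrite negbK => /eqP.
Qed.

Lemma multi_glt k (lam : 'I_k -> ordAlph) n (x y : n.-tuple (prodAlph lam)) :
  multi_lt x y = glt (fun i : 'I_k => nat_of_ord i)
                     (fun i => @rlex_lt (lam i) n) (comp_word x) (comp_word y).
Proof. by []. Qed.

Lemma multi_sto k (lam : 'I_k -> ordAlph) n : sto (@multi_lt k lam n).
Proof.
split.
- by move=> u; rewrite multi_glt; apply/negbTE/glt_irr => i; exact: rlex_sto.
- move=> v u w; rewrite !multi_glt; apply: glt_trans; [exact: val_inj | move=> i; exact: rlex_sto].
- move=> u v nuv; rewrite !multi_glt; apply: glt_total => [i|]; first exact: rlex_sto.
  case: (boolP [exists i, comp_word u i != comp_word v i]) => [/existsP //|/existsPn H].
  case/negP: nuv; apply/eqP/eq_from_tnth => t; apply/ffunP => i.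
  have := H i; rewrite negbK => /eqP /(congr1 (fun w => tnth w t)).
  by rewrite !tnth_map.
Qed.

Lemma rlex_le_sto (B : ordAlph) n : rlex_le (B:=B) (n:=n) = lel (@rlex_lt B n).
Proof. by []. Qed.
Lemma multi_le_sto k (lam : 'I_k -> ordAlph) n : multi_le (lam:=lam) (n:=n) = lel (@multi_lt k lam n).
Proof. by []. Qed.


Lemma pmap_map (A B C : Type) (f : B -> option C) (g : A -> B) s :
  pmap f (map g s) = pmap (fun x => f (g x)) s.
Proof. by elim: s => //= a s ->. Qed.

Lemma pmap_some (A B : Type) (h : A -> B) s : pmap (fun x => Some (h x)) s = map h s.
Proof. by elim: s => //= a s ->. Qed.

Lemma zip_map_r (A B B' : Type) (phi : B -> B') (u : seq A) (x : seq B) :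
  zip u (map phi x) = map (fun p => (p.1, phi p.2)) (zip u x).
Proof. by elim: u x => [|a u IH] [|b x] //=; rewrite IH. Qed.

Lemma sort_ext (T : eqType) (r1 r2 : rel T) :
  r1 =2 r2 -> total r1 -> transitive r1 -> antisymmetric r1 -> sort r1 =1 sort r2.
Proof.
move=> E tot tr asym s; apply: (sorted_eq tr asym).
- exact: sort_sorted.
- rewrite (eq_sorted E); apply: sort_sorted => x y; rewrite -!E; exact: tot.
- by rewrite perm_sort perm_sym perm_sort.
Qed.

Section Gen.
Variables (S G C : finType) (lt : forall n, rel (n.-tuple C)).

Definition gsem_at (Adom : dfa S) (Auniv : dfa (S * C)%type) (Ag : G -> dfa (S * C)%type)
    m (u : seq S) : option (seq G) :=
  if accepts Adom u then
    Some (pmap (fun x : m.-tuple C => [pick g : G | accepts (Ag g) (wtensor u x)])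
       (sort (lel (@lt m)) [seq x : m.-tuple C <- enum {: m.-tuple C} | accepts Auniv (wtensor u x)]))
  else None.

Definition gsem Adom Auniv Ag (u : seq S) := gsem_at Adom Auniv Ag (size u) u.

Definition gvalid (Adom : dfa S) (Auniv : dfa (S * C)%type) (Ag : G -> dfa (S * C)%type) :=
  forall u, accepts Adom u -> forall x : (size u).-tuple C,
    accepts Auniv (wtensor u x) -> exists! g, accepts (Ag g) (wtensor u x).

Definition gauto (f : transduction S G) :=
  exists Adom Auniv Ag, gvalid Adom Auniv Ag /\ forall u, f u = gsem Adom Auniv Ag u.

Lemma gsem_atE Adom Auniv Ag m u : size u = m -> gsem Adom Auniv Ag u = gsem_at Adom Auniv Ag m u.
Proof. by move=> <-. Qed.
End Gen.

Lemma lex_gauto k (S G : finType) (f : transduction S G) :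
  lex_automatic k f <-> exists lam : 'I_k -> ordAlph, gauto (@multi_lt k lam) f.
Proof. by []. Qed.

Section Transport.
Variables (S G C C' : finType) (phi : C -> C') (phi_bij : bijective phi).
Variables (lt : forall n, rel (n.-tuple C)) (lt' : forall n, rel (n.-tuple C')).
Hypothesis compat : forall n (x y : n.-tuple C), lt' (map_tuple phi x) (map_tuple phi y) = lt x y.
Hypothesis sto_lt : forall n, sto (@lt n).
Hypothesis sto_lt' : forall n, sto (@lt' n).

Let h := fun p : S * C => Some (p.1, phi p.2).

Lemma acc_h (M : dfa (S * C')%type) (u : seq S) (x : seq C) :
  accepts (dfa_omap M h) (zip u x) = accepts M (zip u (map phi x)).
Proof.
rewrite accepts_omap pmap_some zip_map_r.
by have -> : forall w, all (fun a => h a != None) w by elim.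
Qed.

Lemma gauto_transport (f : transduction S G) : gauto lt' f -> gauto lt f.
Proof.
case=> Adom [Auniv [Ag [V E]]].
exists Adom, (dfa_omap Auniv h), (fun g => dfa_omap (Ag g) h); split.
  move=> u Hu x; rewrite /wtensor acc_h => Hx.
  have [g [Hg U]] := V u Hu (map_tuple phi x) Hx.
  exists g; split; first by rewrite /wtensor acc_h.
  by move=> g'; rewrite /wtensor acc_h; apply: U.
move=> u; rewrite E /gsem /gsem_at; case: ifP => // _; congr Some.
set n := size u.
pose mp := fun x : n.-tuple C => map_tuple phi x.
have mp_inj : injective mp.
  move=> x y /(congr1 val) /= /(inj_map (bij_inj phi_bij)) H; exact: val_inj.
have Hperm : perm_eq (enum {: n.-tuple C'}) (map mp (enum {: n.-tuple C})).
  apply: uniq_perm; first exact: enum_uniq.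
    by rewrite (map_inj_uniq mp_inj) enum_uniq.
  move=> t'; rewrite mem_enum; symmetry; case: phi_bij => psi K1 K2.
  apply/mapP; exists (map_tuple psi t'); rewrite ?mem_enum //.
  apply: val_inj => /=; rewrite -map_comp map_id_in // => c _; exact: K2.
have HS : sort (lel (@lt' n)) [seq x : n.-tuple C' <- enum {: n.-tuple C'} | accepts Auniv (wtensor u x)]
  = sort (lel (@lt' n)) [seq x : n.-tuple C' <- map mp (enum {: n.-tuple C}) | accepts Auniv (wtensor u x)].
  apply/(perm_sortP (lel_total (sto_lt' n)) (lel_trans (sto_lt' n)) (lel_asym (sto_lt' n))).
  by rewrite perm_filter.
rewrite HS.
rewrite filter_map sort_map pmap_map.
rewrite -(sort_ext (r1 := lel (@lt n))); last first.
- exact: lel_asym.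
- exact: lel_trans.
- exact: lel_total.
- move=> x y; rewrite /lel /= (inj_eq mp_inj) compat //.
rewrite (@eq_filter _ _ (fun x : n.-tuple C => accepts (dfa_omap Auniv h) (wtensor u x))); last first.
  by move=> x; rewrite /wtensor acc_h.
apply: eq_pmap => x; apply: eq_pick => g; by rewrite /wtensor acc_h.
Qed.
End Transport.


Lemma uniq_single (T : eqType) (t0 : T) (s : seq T) :
  (forall x : T, x = t0) -> t0 \in s -> uniq s -> s = [:: t0].
Proof.
move=> H; case: s => [|x s]; first by rewrite in_nil.
case: s => [|y s]; first by move=> _ _; rewrite (H x).
by move=> _; rewrite /= (H x) (H y) inE eqxx.
Qed.

Section Single.
Variables (S G C : finType) (c0 : C) (Cu : forall c : C, c = c0).
Variable (lt : forall n, rel (n.-tuple C)).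

Lemma zip_single n (u : seq S) (x : n.-tuple C) : size u = n ->
  zip u x = map (fun a => (a, c0)) u.
Proof.
move=> Hs; have -> : tval x = nseq n c0.
  apply: (@eq_from_nth _ c0); first by rewrite size_tuple size_nseq.
  by move=> i _; rewrite [LHS]Cu [RHS]Cu.
subst n; by elim: u {x} => //= a u ->.
Qed.

Lemma gsem_single (Adom : dfa S) (Auniv : dfa (S * C)%type) (Ag : G -> dfa (S * C)%type) (u : seq S) :
  gsem lt Adom Auniv Ag u =
  if accepts Adom u then
    Some (if accepts Auniv (map (fun a => (a, c0)) u)
          then oapp (fun g => [:: g]) [::] [pick g | accepts (Ag g) (map (fun a => (a, c0)) u)]
          else [::])
  else None.
Proof.
rewrite /gsem /gsem_at; case: ifP => // _; congr Some.
set n := size u.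
have [t0 _] : exists t0 : n.-tuple C, true by exists [tuple of nseq n c0].
have Ht : forall t : n.-tuple C, t = t0.
  move=> t; apply: eq_from_tnth => i; by rewrite (Cu (tnth t i)) (Cu (tnth t0 i)).
rewrite (@uniq_single _ t0 (enum _) Ht) ?mem_enum ?enum_uniq //= /wtensor.
rewrite (zip_single t0 (erefl _)).
case: ifP => _ //=.
by rewrite (zip_single t0 (erefl _)).
Qed.
End Single.

Definition mapc (S C : Type) (c0 : C) (u : seq S) := map (fun a => (a, c0)) u.

Definition rl (S C : finType) (c0 : C) (M : dfa (S * C)%type) : dfa S :=
  dfa_omap M (fun a : S => Some (a, c0)).

Lemma acc_rl (S C : finType) (c0 : C) (M : dfa (S * C)%type) (u : seq S) : accepts (rl c0 M) u = accepts M (mapc c0 u).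
Proof.
rewrite /rl accepts_omap pmap_some.
by have -> : forall w : seq S, all (fun a => Some (a, c0) != None) w by elim.
Qed.

Definition pfst (S C : finType) (M : dfa S) : dfa (S * C)%type :=
  dfa_omap M (fun p : S * C => Some p.1).

Lemma acc_pfst (S C : finType) (M : dfa S) (w : seq (S * C)) :
  accepts (pfst C M) w = accepts M (map fst w).
Proof.
rewrite /pfst accepts_omap pmap_some.
by have -> : forall w : seq (S * C), all (fun a => Some a.1 != None) w by elim.
Qed.

Lemma map_fst_mapc (S C : Type) (c0 : C) (u : seq S) : map fst (mapc c0 u) = u.
Proof. by elim: u => //= a u ->. Qed.

Definition langS (S C G : finType) (c0 : C) (Adom : dfa S) (Auniv : dfa (S * C)%type)
  (Ag : G -> dfa (S * C)%type) (o : option G) : dfa S :=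
  match o with
    | None => dfa_bin andb Adom (dfa_not (rl c0 Auniv))
    | Some g => dfa_bin andb Adom (dfa_bin andb (rl c0 Auniv) (rl c0 (Ag g))) end.

Lemma acc_langS (S C G : finType) (c0 : C) Adom Auniv (Ag : G -> dfa (S * C)%type) o u :
  accepts (langS c0 Adom Auniv Ag o) u =
  if o is Some g then [&& accepts Adom u, accepts Auniv (mapc c0 u) & accepts (Ag g) (mapc c0 u)]
  else accepts Adom u && ~~ accepts Auniv (mapc c0 u).
Proof. by case: o => [g|]; rewrite /langS !accepts_bin ?accepts_not !acc_rl. Qed.

Section Single2.
Variables (S G C : finType) (c0 : C) (Cu : forall c : C, c = c0).
Variable (lt : forall n, rel (n.-tuple C)).

Lemma gauto_simple (f : transduction S G) : gauto lt f <-> simple_trans f.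
Proof.
split.
- case=> Adom [Auniv [Ag [V E]]].
  have V1 : forall u, accepts Adom u -> accepts Auniv (mapc c0 u) ->
      exists! g, accepts (Ag g) (mapc c0 u).
    move=> u Hu; have := V u Hu [tuple of nseq (size u) c0].
    by rewrite /wtensor (zip_single Cu _ (erefl (size u))).
  pose Lang := langS c0 Adom Auniv Ag.
  pose wo (o : option G) : seq G := if o is Some g then [:: g] else [::].
  exists #|{: option G}|, (fun i => Lang (enum_val i)), (fun i => wo (enum_val i)).
  split; [|split].
  + move=> i j nij u.
    have : enum_val i != enum_val j by rewrite (inj_eq enum_val_inj).
    move: (enum_val i) (enum_val j) => o1 o2.
    rewrite !acc_langS.
    case: o1 o2 => [g1|] [g2|] // ne.
    * apply/negP => /andP [/and3P [Hd Hu H1] /and3P [_ _ H2]].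
      have [g [_ U]] := V1 u Hd Hu.
      by case/negP: ne; rewrite -(U _ H1) -(U _ H2).
    * by case: (accepts Auniv (mapc c0 u)); rewrite /= ?andbF.
    * by case: (accepts Auniv (mapc c0 u)); rewrite /= ?andbF.
  + by move=> i; case: (enum_val i).
  + move=> u; split.
    * move=> i; move: (enum_val i) => o; rewrite E (gsem_single Cu).
      rewrite acc_langS; case: o => [g|].
        case/and3P => Hd Hu Hg; rewrite Hd Hu /=; case: pickP => [g' Hg'|/(_ g)]; last by rewrite Hg.
        have [g0 [_ U]] := V1 u Hd Hu.
        by rewrite -(U _ Hg) -(U _ Hg').
      by case/andP => -> /negbTE ->.
    * move=> H; rewrite E (gsem_single Cu); case: ifP => // Hd; exfalso.
      case: (boolP (accepts Auniv (mapc c0 u))) => Hu.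
        have [g [Hg _]] := V1 u Hd Hu.
        have := H (enum_rank (Some g)); rewrite enum_rankK acc_langS.
        by rewrite Hd Hu Hg.
      have := H (enum_rank None); rewrite enum_rankK acc_langS.
      by rewrite Hd Hu.
- case=> n [L [w [Hdis [Hw Hf]]]].
  have Uq : forall u i j, accepts (L i) u -> accepts (L j) u -> i = j.
    move=> u i j Hi Hj; case: (eqVneq i j) => // nij.
    by have := Hdis i j nij u; rewrite Hi Hj.
  exists (dfa_comb L (fun v => [exists i, v i])),
         (pfst C (dfa_comb L (fun v => [exists i, v i && (w i != [::])]))),
         (fun g => pfst C (dfa_comb L (fun v => [exists i, v i && (w i == [:: g])]))).
  have Zu : forall (u : seq S) (x : (size u).-tuple C), wtensor u x = mapc c0 u.
    by move=> u x; rewrite /wtensor (zip_single Cu _ (erefl (size u))).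
  split.
  + move=> u Hu x; rewrite Zu acc_pfst map_fst_mapc accepts_comb.
    case/existsP => i; rewrite ffunE => /andP [Hi Hwi].
    have [g Hg] : exists g, w i = [:: g].
      move: (Hw i) Hwi; case: (w i) => [|g [|g' s]] //=; by exists g.
    exists g; split.
      by rewrite acc_pfst map_fst_mapc accepts_comb; apply/existsP; exists i; rewrite ffunE Hi Hg eqxx.
    move=> g'; rewrite acc_pfst map_fst_mapc accepts_comb => /existsP [j].
    rewrite ffunE => /andP [Hj /eqP Hg'].
    by move: Hg'; rewrite -(Uq _ _ _ Hi Hj) Hg => -[->].
  + move=> u; rewrite (gsem_single Cu) accepts_comb !acc_pfst !map_fst_mapc accepts_comb.
    case: existsP => [[i Hi]|Hn].
      rewrite ffunE in Hi; rewrite (proj1 (Hf u) i Hi); congr Some.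
      have Ex : forall P : 'I_n -> bool, [exists j, [ffun j => accepts (L j) u] j && P j] = P i.
        move=> P; apply/existsP/idP => [[j]|Pi]; last by exists i; rewrite ffunE Hi.
        by rewrite ffunE => /andP [Hj]; rewrite (Uq _ _ _ Hi Hj).
      rewrite Ex (@eq_pick _ _ (fun g => w i == [:: g])); last first.
        by move=> g; rewrite acc_pfst map_fst_mapc accepts_comb Ex.
      move: (Hw i); case: (w i) => [|g [|//]] _ //=.
      case: pickP => [g' /eqP [->] // | /(_ g)]; by rewrite eqxx.
    apply: (proj2 (Hf u)) => i; apply/negP => Hi; apply: Hn; exists i; by rewrite ffunE.
Qed.
End Single2.


Section TupOps.
Variables (B D : finType) (n : nat).
Definition fstT (x : n.-tuple (B * D)%type) : n.-tuple B := map_tuple fst x.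
Definition sndT (x : n.-tuple (B * D)%type) : n.-tuple D := map_tuple snd x.
Definition pairT (b : n.-tuple B) (d : n.-tuple D) : n.-tuple (B * D)%type := [tuple of zip b d].

Lemma fstT_pair b d : fstT (pairT b d) = b.
Proof. apply: val_inj => /=; apply: unzip1_zip; by rewrite !size_tuple. Qed.
Lemma sndT_pair b d : sndT (pairT b d) = d.
Proof. apply: val_inj => /=; apply: unzip2_zip; by rewrite !size_tuple. Qed.
Lemma mfst_pair b d : map fst (pairT b d) = b.
Proof. exact: (congr1 val (fstT_pair b d)). Qed.
Lemma msnd_pair b d : map snd (pairT b d) = d.
Proof. exact: (congr1 val (sndT_pair b d)). Qed.
Lemma pairT_eta x : pairT (fstT x) (sndT x) = x.
Proof. apply: val_inj => /=; exact: zip_unzip. Qed.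
Lemma pairT_inj b d b' d' : pairT b d = pairT b' d' -> b = b' /\ d = d'.
Proof. move=> E; split; [rewrite -(fstT_pair b d) E fstT_pair // | rewrite -(sndT_pair b d) E sndT_pair //]. Qed.
End TupOps.

Section Core.
Variables (B : ordAlph) (D : finType) (ltD : forall n, rel (n.-tuple D)).
Hypothesis stoD : forall n, sto (@ltD n).

Definition prodlt n (x y : n.-tuple (B * D)%type) :=
  rlex_lt (fstT x) (fstT y) || (fstT x == fstT y) && ltD (sndT x) (sndT y).

Lemma stoP n : sto (@prodlt n).
Proof.
have [irrB trB totB] := rlex_sto B n; have [irrD trD totD] := stoD n.
split.
- by move=> x; rewrite /prodlt irrB irrD andbF.
- move=> y x z; rewrite /prodlt => /orP [H1|/andP [/eqP E1 H1]] /orP [H2|/andP [/eqP E2 H2]].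
  + by rewrite (trB _ _ _ H1 H2).
  + by rewrite -E2 H1.
  + by rewrite E1 H2.
  + by rewrite E1 E2 eqxx (trD _ _ _ H1 H2) orbT.
- move=> x y nxy; rewrite /prodlt; case: (eqVneq (fstT x) (fstT y)) => [E|N].
    rewrite E irrB /=; apply: totD; apply: contra nxy => /eqP E2.
    by rewrite -(pairT_eta x) -(pairT_eta y) E E2.
  by case/orP: (totB _ _ N) => ->; rewrite ?orbT.
Qed.

Definition enumT (T : finType) n := enum {: n.-tuple T}.

Lemma flatten_perm_blocks (A T : eqType) (F F' : A -> seq T) s :
  (forall a, perm_eq (F a) (F' a)) -> perm_eq (flatten (map F s)) (flatten (map F' s)).
Proof. move=> H; elim: s => //= a s IH; exact: perm_cat. Qed.

Lemma enum_words_sorted n : sorted (@rlex_le B n) (enum_words B n).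
Proof. apply: sort_sorted; exact: lel_total (rlex_sto B n). Qed.

Lemma enum_words_uniq n : uniq (enum_words B n).
Proof. by rewrite sort_uniq enum_uniq. Qed.

Lemma mem_enum_words n b : b \in enum_words B n.
Proof. by rewrite mem_sort mem_enum. Qed.

Lemma core_identity n (P : pred (n.-tuple (B * D)%type)) :
  sort (lel (@prodlt n)) [seq x <- enumT (B * D)%type n | P x] =
  flatten [seq map (pairT b) (sort (lel (@ltD n)) [seq d <- enumT D n | P (pairT b d)])
          | b <- enum_words B n].
Proof.
have [irrB trB totB] := rlex_sto B n; have [irrD trD totD] := stoD n.
apply: (sorted_eq (lel_trans (stoP n)) (lel_asym (stoP n))).
- apply: sort_sorted; exact: lel_total (stoP n).
- rewrite sorted_pairwise; last exact: lel_trans (stoP n).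
  have : sorted (@rlex_le B n) (enum_words B n) := enum_words_sorted n.
  have : uniq (enum_words B n) := enum_words_uniq n.
  elim: (enum_words B n) => //= b bs IH /andP [nb ub] Sb.
  rewrite pairwise_cat; apply/and3P; split.
  + apply/allrelP => x y /mapP [d _ ->] /flattenP [ys /mapP [b' b'in ->] /mapP [d' _ ->]].
    have lbb : rlex_lt b b'.
      have := order_path_min (lel_trans (rlex_sto B n)) Sb; move/allP/(_ _ b'in).
      rewrite /rlex_le /lel /=; case/orP => // /eqP E; by move: nb; rewrite E b'in.
    by rewrite /lel /prodlt !fstT_pair lbb orbT.
  + rewrite -sorted_pairwise; last exact: lel_trans (stoP n).
    have : sorted (lel (@ltD n)) (sort (lel (@ltD n)) [seq d <- enumT D n | P (pairT b d)]).
      apply: sort_sorted; exact: lel_total (stoD n).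
    elim: (sort _ _) => //= d ds IH2; case: ds IH2 => //= d' ds IH2 /andP [H1 H2].
    rewrite IH2 // andbT /lel /prodlt !fstT_pair !sndT_pair eqxx irrB /=.
    by move: H1; rewrite /lel /=; case/orP => [/eqP -> | ->]; rewrite ?eqxx ?orbT.
  + apply: IH => //; exact: path_sorted Sb.
- apply: (@perm_trans _ (flatten [seq map (pairT b) [seq d <- enumT D n | P (pairT b d)] | b <- enum_words B n])).
  + rewrite perm_sort.
    have -> : flatten [seq map (pairT b) [seq d <- enumT D n | P (pairT b d)] | b <- enum_words B n]
      = [seq x <- [seq pairT b d | b <- enum_words B n, d <- enumT D n] | P x].
      rewrite filter_flatten -map_comp; congr flatten; apply: eq_map => b /=.
      by rewrite filter_map.
    apply: perm_filter; apply: uniq_perm.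
    * exact: enum_uniq.
    * apply: allpairs_uniq; [exact: enum_words_uniq | exact: enum_uniq |].
      move=> [b d] [b' d'] _ _ /= E; by case: (pairT_inj E) => -> ->.
    * move=> x; rewrite mem_enum; symmetry; rewrite -(pairT_eta x).
      apply: allpairs_f; [exact: mem_enum_words | exact: mem_enum].
  + apply: flatten_perm_blocks => b; apply: perm_map; by rewrite perm_sym perm_sort.
Qed.
End Core.

Lemma pmap_flatten (A T : Type) (f : A -> option T) (ss : seq (seq A)) :
  pmap f (flatten ss) = flatten (map (pmap f) ss).
Proof. by elim: ss => //= s ss <-; rewrite pmap_cat. Qed.

Lemma gvalid_at (S G C : finType) (Ad : dfa S) (Au : dfa (S * C)%type) (Ag : G -> dfa (S * C)%type) :
  gvalid Ad Au Ag -> forall (w : seq S) m (x : m.-tuple C), size w = m -> accepts Ad w ->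
  accepts Au (zip w x) -> exists! g, accepts (Ag g) (zip w x).
Proof. move=> V w m x Hm; subst m => Hw; exact: (V w Hw x). Qed.

Section StepL.
Variables (S G : finType) (B : ordAlph) (D : finType) (ltD : forall n, rel (n.-tuple D)).
Hypothesis stoD : forall n, sto (@ltD n).

Definition hB (p : (S * (B * D))%type) : option ((S * B) * D)%type := Some ((p.1, p.2.1), p.2.2).

Lemma acc_hB (M : dfa ((S * B) * D)%type) (u : seq S) (x : seq (B * D)) :
  accepts (dfa_omap M hB) (zip u x) = accepts M (zip (zip u (map fst x)) (map snd x)).
Proof.
rewrite accepts_omap pmap_some.
have -> : forall w, all (fun a => hB a != None) w by elim.
congr accepts; by elim: u x => [|a u IH] [|[b d] x] //=; rewrite IH.
Qed.

Lemma step_left (g : transduction (S * B)%type G) (f : transduction S G) :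
  gauto ltD g -> (forall u, f u = @maplex _ _ B g u) -> gauto (@prodlt B D ltD) f.
Proof.
case=> Ad [Au [Ag [V E]]] Ef.
exists (dfa_forall Ad), (dfa_omap Au hB), (fun g => dfa_omap (Ag g) hB); split.
  move=> u; rewrite accepts_forall => /forallP Hu x; rewrite /wtensor acc_hB => Hx.
  have Hs : size (zip u (fstT x)) = size u by rewrite size_zip size_tuple minnn.
  have [g0 [Hg0 U]] := gvalid_at V Hs (x := sndT x) (Hu (fstT x)) Hx.
  exists g0; split; first by rewrite /wtensor acc_hB.
  by move=> g'; rewrite /wtensor acc_hB; apply: U.
move=> u; rewrite Ef /maplex /gsem /gsem_at accepts_forall.
set n := size u.
have -> : map (fun x : n.-tuple B => g (wtensor u x)) (enum_words B n) =
          map (fun b : n.-tuple B => gsem_at ltD Ad Au Ag n (zip u b)) (enum_words B n).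
  apply: eq_map => b; rewrite E; apply: gsem_atE.
  by rewrite size_zip size_tuple minnn.
case: (boolP [forall b : n.-tuple B, accepts Ad (zip u b)]) => HA; last first.
  case: allP => // H; case/forallP: HA => b; apply/negPn/negP => Hb.
  have := H _ (map_f _ (mem_enum_words b)); by rewrite /gsem_at (negbTE Hb).
have -> : map (fun b : n.-tuple B => gsem_at ltD Ad Au Ag n (zip u b)) (enum_words B n) =
   map (fun b : n.-tuple B => Some (pmap (fun x : n.-tuple D => [pick g | accepts (Ag g) (zip (zip u b) x)])
        (sort (lel (@ltD n)) [seq x : n.-tuple D <- enum {: n.-tuple D} | accepts Au (zip (zip u b) x)])))
     (enum_words B n).
  by apply: eq_map => b; rewrite /gsem_at (forallP HA b).
rewrite all_map (@eq_all _ _ predT) ?all_predT //; congr Some.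
rewrite pmap_map pmap_some.
rewrite (core_identity stoD) pmap_flatten -map_comp; congr flatten; apply: eq_map => b.
rewrite /comp pmap_map (@eq_filter _ _ (fun d : n.-tuple D => accepts Au (zip (zip u b) d))); last first.
  by move=> d; rewrite /wtensor acc_hB mfst_pair msnd_pair.
apply: eq_pmap => d; apply: eq_pick => g0.
by rewrite /wtensor acc_hB mfst_pair msnd_pair.
Qed.
End StepL.

Section OptA.
Variable B : ordAlph.
Definition olt (x y : option B) : bool :=
  match x, y with
  | None, Some _ => true
  | Some a, Some b => oa_lt a b
  | _, _ => false end.
Lemma olt_irr : irreflexive olt.
Proof. by case=> //= a; exact: oa_irr. Qed.
Lemma olt_trans : transitive olt.
Proof. by case=> [b|] [a|] [c|] //=; exact: oa_trans. Qed.
Lemma olt_total (x y : option B) : x != y -> olt x y || olt y x.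
Proof. case: x y => [a|] [b|] //= ne; apply: oa_total; by apply: contra ne => /eqP ->. Qed.
Definition optA : ordAlph := @OrdAlph (option B) olt olt_irr olt_trans olt_total.

Definition someT n (b : n.-tuple B) : n.-tuple optA := @map_tuple n B (option B) Some b.

Lemma someT_inj n : injective (@someT n).
Proof. move=> x y /(congr1 val) /= /(inj_map (@Some_inj _)) H; exact: val_inj. Qed.

Lemma rlex_someT n (x y : n.-tuple B) : rlex_lt (someT x) (someT y) = rlex_lt x y.
Proof.
apply: eq_existsb => i; rewrite /someT !tnth_map /=; congr (_ && _).
by apply: eq_forallb => j; rewrite !tnth_map (inj_eq (@Some_inj _)).
Qed.

Definition allS (T : eqType) (s : seq (option T)) := all (fun o => o != None) s.

Lemma enum_words_opt n :
  [seq b : n.-tuple optA <- enum_words optA n | allS (T:=B) b] = map (@someT n) (enum_words B n).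
Proof.
have [irrO trO totO] := rlex_sto optA n.
rewrite /enum_words filter_sort; last exact: lel_trans (rlex_sto optA n); last exact: lel_total (rlex_sto optA n).
have -> : sort (@rlex_le optA n) [seq b : n.-tuple optA <- enum {: n.-tuple optA} | allS (T:=B) b] =
          sort (@rlex_le optA n) (map (@someT n) (enum {: n.-tuple B})).
  apply/(perm_sortP (lel_total (rlex_sto optA n)) (lel_trans (rlex_sto optA n)) (lel_asym (rlex_sto optA n))).
  apply: uniq_perm; first by rewrite filter_uniq // enum_uniq.
    by rewrite (map_inj_uniq (@someT_inj n)) enum_uniq.
  move=> x; rewrite mem_filter mem_enum andbT; apply/idP/mapP => [Hx|[b _ ->]].
    have Hs : size (pmap id x) == n.
      rewrite size_pmap; apply/eqP; rewrite -[RHS](size_tuple x); apply/eqP; rewrite -all_count; move: Hx; apply: sub_all; by case.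
    exists (Tuple Hs); first by rewrite mem_enum.
    apply: val_inj => /=; move: Hx; rewrite /allS; elim: (tval x) => //= [[a|]] s IH //= /IH <-.
    by [].
  by rewrite /allS /someT /= all_map; apply/allP.
rewrite sort_map; congr map; symmetry; apply: sort_ext.
- by move=> x y; rewrite /= /rlex_le /lel (inj_eq (@someT_inj n)) rlex_someT.
- exact: lel_total (rlex_sto B n).
- exact: lel_trans (rlex_sto B n).
- exact: lel_asym (rlex_sto B n).
Qed.
End OptA.

Lemma gvalid_seq (S G C : finType) (Ad : dfa S) (Au : dfa (S * C)%type) (Ag : G -> dfa (S * C)%type) :
  gvalid Ad Au Ag -> forall (w : seq S) (z : seq C), size z = size w -> accepts Ad w ->
  accepts Au (zip w z) -> exists! g, accepts (Ag g) (zip w z).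
Proof. move=> V w z Hz Hw; exact: (V w Hw (Tuple (introT eqP Hz))). Qed.

Lemma flatten_filter_nil (A T : Type) (F : A -> seq T) (p : pred A) s :
  (forall a, ~~ p a -> F a = [::]) -> flatten (map F s) = flatten (map F (filter p s)).
Proof. move=> H; elim: s => //= a s IH; case: (boolP (p a)) => pa /=; by rewrite IH // H. Qed.

Section StepR.
Variables (S G : finType) (B : ordAlph) (D : finType) (ltD : forall n, rel (n.-tuple D)).
Hypothesis stoD : forall n, sto (@ltD n).

Definition hh (p : ((S * optA B) * D)%type) : option (S * (B * D))%type :=
  match p.1.2 with Some b => Some (p.1.1, (b, p.2)) | None => None end.

Lemma acc_hh (M : dfa (S * (B * D))%type) (u : seq S) (b' : seq (option B)) (d : seq D) :
  size b' = size u -> size d = size u ->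
  accepts (dfa_omap M hh) (zip (zip u b') d) = allS b' && accepts M (zip u (zip (pmap id b') d)).
Proof.
move=> Hb Hd; rewrite accepts_omap.
have H1 : all (fun a => hh a != None) (zip (zip u b') d) = allS b'.
  elim: u b' d Hb Hd => [|a u IH] [|o b'] [|x d] //= [Hb] [Hd]; rewrite IH //.
  by case: o.
have H2 : allS b' -> pmap hh (zip (zip u b') d) = zip u (zip (pmap id b') d).
  clear H1; elim: u b' d Hb Hd => [|a u IH] [|o b'] [|x d] //= [Hb] [Hd].
  by case: o => //= b /IH ->.
by rewrite H1; case: (boolP (allS b')) => // /H2 ->.
Qed.

Lemma pmap_id_some (T : Type) (s : seq T) : pmap id (map Some s) = s.
Proof. by elim: s => //= a s ->. Qed.

Lemma step_right (f : transduction S G) :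
  gauto (@prodlt B D ltD) f ->
  exists g : transduction (S * optA B)%type G, gauto ltD g /\ forall u, f u = @maplex _ _ (optA B) g u.
Proof.
case=> Ad [Au [Ag [V E]]].
pose Adg := pfst (optA B) Ad.
pose Aug := dfa_omap Au hh.
pose Agg := fun g => dfa_omap (Ag g) hh.
exists (gsem ltD Adg Aug Agg); split.
  exists Adg, Aug, Agg; split => //.
  move=> w; rewrite acc_pfst => Hw x Hx.
  have Hs2 : size (unzip2 w) = size (unzip1 w) by rewrite !size_map.
  have Hsx : size x = size (unzip1 w) by rewrite size_tuple size_map.
  move: Hx; rewrite /wtensor -[X in zip X _](zip_unzip w) acc_hh // => /andP [HS Hx].
  have Hz : size (zip (pmap id (unzip2 w)) x) = size (unzip1 w).
    rewrite size_zip size_pmap Hsx -Hs2; move: HS; rewrite /allS all_count => /eqP E2.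
    have -> : count [eta isSome] (unzip2 w) = size (unzip2 w) by rewrite -[RHS]E2; apply: eq_count; case.
    by rewrite minnn.
  have [g0 [Hg0 U]] := gvalid_seq V Hz Hw Hx.
  exists g0; split; first by rewrite acc_hh // HS.
  move=> g'; rewrite acc_hh // HS; exact: U.
move=> u; rewrite E /gsem /gsem_at /maplex.
set n := size u.
have -> : map (fun x : n.-tuple (optA B) => gsem ltD Adg Aug Agg (wtensor u x)) (enum_words (optA B) n) =
          map (fun b : n.-tuple (optA B) => gsem_at ltD Adg Aug Agg n (zip u b)) (enum_words (optA B) n).
  apply: eq_map => b; apply: gsem_atE.
  by rewrite size_zip size_tuple minnn.
have Had : forall b : n.-tuple (optA B), accepts Adg (zip u b) = accepts Ad u.
  by move=> b; rewrite acc_pfst; congr accepts; apply: unzip1_zip; rewrite size_tuple.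
case: (boolP (accepts Ad u)) => HA; last first.
  case: allP => // H; exfalso.
  have := H _ (map_f _ (mem_enum_words (@nseq_tuple n (oa_T (optA B)) None))).
  by rewrite /gsem_at Had (negbTE HA).
rewrite (@eq_map _ _ _ (fun b : n.-tuple (optA B) => Some (pmap (fun x : n.-tuple D => [pick g | accepts (Agg g) (zip (zip u b) x)])
        (sort (lel (@ltD n)) [seq x : n.-tuple D <- enum {: n.-tuple D} | accepts Aug (zip (zip u b) x)])))); last first.
  by move=> b; rewrite /gsem_at Had HA.
rewrite all_map (@eq_all _ _ predT) ?all_predT //; congr Some.
rewrite pmap_map pmap_some.
rewrite (core_identity stoD) pmap_flatten -map_comp.
rewrite (@flatten_filter_nil _ _ _ (fun b : n.-tuple (optA B) => allS (T:=B) b)); last first.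
  move=> b nb; rewrite (@eq_filter _ _ pred0) ?filter_pred0 ?sort_nil //.
  move=> d; rewrite /Aug (acc_hh Au (b' := tval b)) ?size_tuple //; by rewrite (negbTE nb).
rewrite (enum_words_opt B n) -map_comp; congr flatten; apply: eq_map => b.
rewrite /comp pmap_map (@eq_filter _ _ (fun d : n.-tuple D => accepts Aug (zip (zip u (someT b)) d))); last first.
  move=> d; rewrite /Aug acc_hh ?size_tuple // /someT /= pmap_id_some.
  have -> : allS (T:=B) (map Some b) by rewrite /allS all_map; apply/allP.
  by rewrite /wtensor.
apply: eq_pmap => d; apply: eq_pick => g0.
rewrite /Agg acc_hh ?size_tuple // /someT /= pmap_id_some.
have -> : allS (T:=B) (map Some b) by rewrite /allS all_map; apply/allP.
by rewrite /wtensor.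
Qed.
End StepR.


Lemma foldr_muln_split k (F : 'I_k.+1 -> nat) :
  foldr muln 1 [seq F x | x : 'I_k.+1] = F ord0 * foldr muln 1 [seq F (lift ord0 x) | x : 'I_k].
Proof. by rewrite !foldrE !big_map big_ord_recl. Qed.

Lemma exists_split k (A E : 'I_k.+1 -> bool) :
  [exists i : 'I_k.+1, A i && [forall j : 'I_k.+1, (j < i) ==> E j]] =
  A ord0 || E ord0 && [exists j : 'I_k, A (lift ord0 j) && [forall j' : 'I_k, (j' < j) ==> E (lift ord0 j')]].
Proof.
apply/existsP/idP.
  case=> i; case: (unliftP ord0 i) => [j ->|->] /andP [Ha /forallP He]; last by rewrite Ha.
  have -> : E ord0 by have := He ord0; rewrite lift0 ltn0Sn.
  apply/orP; right; apply/existsP; exists j; rewrite Ha /=.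
  apply/forallP => j'; apply/implyP => jj; have := He (lift ord0 j').
  by rewrite !lift0 ltnS jj.
case/orP => [Ha|/andP [E0 /existsP [j /andP [Ha /forallP He]]]].
  by exists ord0; rewrite Ha; apply/forallP => j.
exists (lift ord0 j); rewrite Ha /=; apply/forallP => i.
case: (unliftP ord0 i) => [j' ->|->] //; rewrite !lift0 ltnS; exact: He.
Qed.

Section Split.
Variables (k : nat) (lam : 'I_k.+1 -> ordAlph).
Definition lamT := fun j : 'I_k => lam (lift ord0 j).

Definition splitF (x : prodAlph lam) : (lam ord0 * prodAlph lamT)%type :=
  (x ord0, finfun (fun j => x (lift ord0 j))).

Lemma splitF_inj : injective splitF.
Proof.
move=> x y [E0 E1]; apply/ffunP => i; case: (unliftP ord0 i) => [j ->|->] //.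
by move/ffunP: E1 => /(_ j); rewrite !ffunE.
Qed.

Lemma splitF_bij : bijective splitF.
Proof.
apply: inj_card_bij; first exact: splitF_inj.
by rewrite card_prod /prodAlph !card_dep_ffun foldr_muln_split.
Qed.

Lemma splitF_compat n (x y : n.-tuple (prodAlph lam)) :
  prodlt (B := lam ord0) (@multi_lt k lamT) (map_tuple splitF x) (map_tuple splitF y) = multi_lt x y.
Proof.
have F0 : forall z : n.-tuple (prodAlph lam), fstT (map_tuple splitF z) = comp_word z ord0.
  by move=> z; apply: val_inj; rewrite /= -map_comp.
have F1 : forall (z : n.-tuple (prodAlph lam)) j, comp_word (sndT (map_tuple splitF z)) j = comp_word z (lift ord0 j).
  move=> z j; apply: val_inj; rewrite /= -!map_comp; apply: eq_map => b /=; by rewrite ffunE.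
rewrite /prodlt !F0 /multi_lt exists_split; congr (_ || _ && _).
by apply: eq_existsb => j; rewrite !F1; congr (_ && _); apply: eq_forallb => j'; rewrite !F1.
Qed.
End Split.


Definition unit_lt (x y : unit) := false.
Lemma unit_lt_irr : irreflexive unit_lt. Proof. by []. Qed.
Lemma unit_lt_trans : transitive unit_lt. Proof. by []. Qed.
Lemma unit_lt_total (x y : unit) : x != y -> unit_lt x y || unit_lt y x.
Proof. by case: x; case: y. Qed.
Definition unitA : ordAlph := @OrdAlph unit unit_lt unit_lt_irr unit_lt_trans unit_lt_total.

Definition lamOf (ls : seq ordAlph) : 'I_(size ls) -> ordAlph := fun i => nth unitA ls i.
Arguments lamOf : clear implicits.

Definition lexP n (S G : finType) (f : transduction S G) : Prop :=
  match n with
  | 0 => simple_trans f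
  | k.+1 => exists (B : ordAlph) (g : transduction (S * B)%type G), isLex k g /\ forall u, f u = maplex g u
  end.

Lemma isLex_inv n (S G : finType) (f : transduction S G) : isLex n f -> lexP n f.
Proof. case=> [S' G' f' H|k' S' G' B g f' H E] /=; first exact: H. by exists B, g. Qed.

Lemma ord0_False (i : 'I_0) : False. Proof. by case: i. Qed.

Section Transp.
Variables (S G : finType) (k : nat) (lam : 'I_k.+1 -> ordAlph) (f : transduction S G).

Lemma transp_a : gauto (@multi_lt k.+1 lam) f ->
  gauto (prodlt (B := lam ord0) (@multi_lt k (lamT lam))) f.
Proof.
case: (splitF_bij lam) => g K1 K2.
apply: (@gauto_transport _ _ _ _ g); first by exists (@splitF k lam).
- move=> n x y.
  have E : forall z : n.-tuple (lam ord0 * prodAlph (lamT lam))%type, map_tuple (@splitF k lam) (map_tuple g z) = z.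
    move=> z; apply: val_inj; rewrite /= -map_comp map_id_in // => c _; exact: K2.
  by rewrite -{2}(E x) -{2}(E y) splitF_compat.
- move=> n; exact: (@stoP (lam ord0) _ _ (fun m => @multi_sto k (lamT lam) m) n).
- move=> n; exact: multi_sto.
Qed.

Lemma transp_b : gauto (prodlt (B := lam ord0) (@multi_lt k (lamT lam))) f ->
  gauto (@multi_lt k.+1 lam) f.
Proof.
apply: (@gauto_transport _ _ _ _ (@splitF k lam)); first exact: splitF_bij.
- move=> n x y; exact: splitF_compat.
- move=> n; exact: multi_sto.
- move=> n; exact: (@stoP (lam ord0) _ _ (fun m => @multi_sto k (lamT lam) m) n).
Qed.
End Transp.

Lemma prodAlph0_unique (lam : 'I_0 -> ordAlph) :
  exists c0 : prodAlph lam, forall c : prodAlph lam, c = c0.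
Proof.
exists (finfun (fun i => False_rect (lam i) (ord0_False i))).
move=> c; apply/ffunP => i; case: (ord0_False i).
Qed.

Lemma main_ind k :
  (forall (S G : finType) (f : transduction S G), lex_automatic k f -> isLex k f) /\
  (forall (S G : finType) (f : transduction S G), isLex k f ->
     exists ls : seq ordAlph, size ls = k /\ gauto (@multi_lt (size ls) (lamOf ls)) f).
Proof.
elim: k => [|k [IH1 IH2]]; split.
- move=> S G f [lam H]; apply: Lex0.
  have [c0 Hc0] := prodAlph0_unique lam.
  by apply/(gauto_simple Hc0); exact: H.
- move=> S G f /isLex_inv /= Hs; exists [::]; split => //.
  have [c0 Hc0] := prodAlph0_unique (lamOf [::]).
  by apply/(gauto_simple Hc0).
- move=> S G f [lam /transp_a H].
  have [g [Hg Ef]] := step_right (fun m => @multi_sto k (lamT lam) m) H.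
  apply: (LexS (B := optA (lam ord0)) _ Ef).
  apply: IH1; by exists (lamT lam).
- move=> S G f /isLex_inv /= [B [g [Hg Ef]]].
  have [ls [Hs Hgl]] := IH2 _ _ _ Hg.
  have Hf := step_left (fun m => @multi_sto (size ls) (lamOf ls) m) Hgl Ef.
  exists (B :: ls); split; first by rewrite /= Hs.
  exact: (@transp_b S G (size ls) (lamOf (B :: ls)) f Hf).
Qed.

End LexProof.

Theorem mainTheorem5 (k : nat) (Hk : 1 <= k) (S G : finType)
    (f : transduction S G) :
  isLex k f <-> lex_automatic k f.
Proof.
have [H1 H2] := LexProof.main_ind k.
split; last exact: H1.
move=> /H2 [ls [Hs H]]; subst k; by exists (LexProof.lamOf ls).
Qed.
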